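(* Let $G$ be a one-point union of cycles of order $p$, i.e. a graph obtained from a collection of cycles by identifying one vertex from each cycle into a single common vertex. Then $str(G)=p+2$.
   Context: For a graph $G$ of order $p$, a numbering of $G$ is a bijection $f:V(G)\to[1,p]$. The strength of a numbering $f$ is $str_f(G)=\max\{f(u)+f(v): uv\in E(G)\}$, and the strength of a graph $G$ with at least one edge is $str(G)=\min\{str_f(G): f \text{ a numbering of } G\}$. *)

(* Defs.v *)
From mathcomp Require Import all_boot.
Set Implicit Arguments. Unset Strict Implicit. Unset Printing Implicit Defensive.

(* A (simple) graph on a finite vertex type T is given by an adjacency
   relation e : rel T.  Its order is p = #|T|. *)

Definition is_numbering (T : finType) (f : T -> nat) : Prop :=
  injective f /\
  (forall x, 1 <= f x <= #|T|) /\
  (forall k, 1 <= k <= #|T| -> exists x, f x = k).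

Definition str_f (T : finType) (e : rel T) (f : T -> nat) : nat :=
  \max_(u : T) \max_(v : T | e u v) (f u + f v).

Definition is_strength (T : finType) (e : rel T) (s : nat) : Prop :=
  (exists f, is_numbering f /\ str_f e f = s) /\
  (forall f, is_numbering f -> s <= str_f e f).

(* Vertex None is the common (identified) vertex; vertex (i, j), j < n i - 1,
   is the j-th further vertex of the i-th cycle, which is
   None - (i,0) - (i,1) - ... - (i, n i - 2) - None. *)
Definition opuc_vertex {k : nat} (n : 'I_k -> nat) : finType :=
  option {i : 'I_k & 'I_(n i).-1}.

Definition opuc_adj {k : nat} (n : 'I_k -> nat) : rel (opuc_vertex n) :=
  fun x y =>
    match x, y with
    | None, None => false
    | None, Some b => (val (tagged b) == 0) || ((val (tagged b)).+1 == (n (tag b)).-1)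
    | Some a, None => (val (tagged a) == 0) || ((val (tagged a)).+1 == (n (tag a)).-1)
    | Some a, Some b =>
        (tag a == tag b) &&
        (((val (tagged a)).+1 == val (tagged b)) || ((val (tagged b)).+1 == val (tagged a)))
    end.

(* Main.v *)
Require Import Defs.
From mathcomp Require Import all_boot zify.
Set Implicit Arguments. Unset Strict Implicit.
Definition g (m t : nat) := if odd t then (t.+1)./2 else m - t./2.
Lemma g_sum t m : t.+1 < m -> g m t + g m t.+1 <= m.+1.
Proof.
rewrite /g /= -!/(uphalf _) !uphalf_half /=.
move: (odd_double_half t); case: (odd t) => /=; rewrite -?/(uphalf _) ?uphalf_half /=; lia.
Qed.
Lemma g_inj m t t' : t < m -> t' < m -> g m t = g m t' -> t = t'.
Proof.
rewrite /g -?/(uphalf _) ?uphalf_half.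
move: (odd_double_half t) (odd_double_half t').
case: (odd t); case: (odd t') => /=; lia.
Qed.
Lemma g_rng m t : t < m -> 1 <= g m t <= m.
Proof.
rewrite /g -?/(uphalf _) ?uphalf_half.
move: (odd_double_half t); case: (odd t) => /=; lia.
Qed.
Section S.
Variables (k : nat) (n : 'I_k -> nat).
Definition w (l : nat) := if @insub _ (fun x => x < k) _ l is Some o then (n o).-1 else 0.
Definition P (i : nat) := \sum_(0 <= l < i) w l.
Definition pos (a : {i : 'I_k & 'I_(n i).-1}) := P (tag a) + tagged a.
Lemma P_mono i i' : i <= i' -> P i <= P i'.
Proof. move=> H; rewrite /P (@big_cat_nat _ _ _ i 0 i' _ _ (leq0n i) H) /=; lia. Qed.
Lemma w_ord (o : 'I_k) : w o = (n o).-1.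
Proof. by rewrite /w valK. Qed.
Lemma P_S (o : 'I_k) : P o.+1 = P o + (n o).-1.
Proof. by rewrite /P big_nat_recr //= w_ord. Qed.
Lemma Pk : P k = #|{: {i : 'I_k & 'I_(n i).-1}}|.
Proof.
rewrite card_tagged sumnE big_map big_enum /P big_mkord /=.
by apply: eq_bigr => i _; rewrite w_ord card_ord.
Qed.
Lemma pos_lt a : pos a < #|{: {i : 'I_k & 'I_(n i).-1}}|.
Proof.
rewrite -Pk /pos; case: a => i j /=.
apply: (@leq_trans (P i.+1)); last by apply: P_mono.
rewrite P_S; move: (ltn_ord j); lia.
Qed.
Lemma pos_inj : injective pos.
Proof.
move=> [i j] [i' j']; rewrite /pos /=.
have [lt|ge] := ltnP i i'.
  have := P_mono lt; rewrite P_S; move: (ltn_ord j); lia.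
have [lt'|ge'] := ltnP i' i.
  have := P_mono lt'; rewrite P_S; move: (ltn_ord j'); lia.
have E : i = i' by apply: val_inj; apply/eqP; rewrite eqn_leq ge ge'.
subst i' => H.
have -> : j = j' by apply: val_inj => /=; lia.
by [].
Qed.
End S.
Lemma surj_of_inj (T : finType) (f : T -> nat) :
  injective f -> (forall x, 1 <= f x <= #|T|) ->
  forall m, 1 <= m <= #|T| -> exists x, f x = m.
Proof.
move=> inj rng m Hm.
have prf : forall x, (f x).-1 < #|T| by move=> x; move: (rng x); lia.
pose h x := Ordinal (prf x).
have hinj : injective h.
  move=> x y /(congr1 val) /= E; apply: inj; move: (rng x) (rng y); lia.
have Hm' : m.-1 < #|T| by lia.
have := inj_card_onto hinj (eq_leq (card_ord _)) (Ordinal Hm').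
case/codomP => x /(congr1 val) /= E; exists x; move: (rng x); lia.
Qed.

Lemma str_ge (T : finType) (e : rel T) f x y : e x y -> f x + f y <= str_f e f.
Proof.
move=> H; rewrite /str_f.
apply: leq_trans (leq_bigmax x).
exact: (leq_bigmax_cond (F := fun v => f x + f v) y H).
Qed.

Lemma neighbors k (n : 'I_k -> nat) : 0 < k -> (forall i, 3 <= n i) ->
  forall v : opuc_vertex n, exists u1 u2, u1 != u2 /\ opuc_adj v u1 /\ opuc_adj v u2.
Proof.
move=> k0 n3 v.
pose F (v : opuc_vertex n) := if v is Some a then (val (tagged a)).+1 else 0.
case: v => [[i j]|].
  have p1 : j.-1 < (n i).-1 by apply: leq_ltn_trans (leq_pred j) (ltn_ord j).
  have [j0|jn0] := eqVneq (val j) 0.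
    have [lt|ge] := ltnP j.+1 (n i).-1.
      exists None, (Some (Tagged (fun i => 'I_(n i).-1) (Ordinal lt))).
      split; first by [].
      by rewrite /= j0 eqxx /= eqxx.
    change (nat_of_ord j = 0) in j0; have := ltn_ord j; have := n3 i; lia.
  have [lt|ge] := ltnP j.+1 (n i).-1.
    exists (Some (Tagged (fun i => 'I_(n i).-1) (Ordinal p1))),
           (Some (Tagged (fun i => 'I_(n i).-1) (Ordinal lt))).
    split; first by apply/eqP => /(congr1 F) /=; case: (nat_of_ord j) => [|jj] //= /eqP; rewrite eqSS; lia.
    have jp : 0 < nat_of_ord j by rewrite lt0n.
    rewrite /= eqxx /=; split; apply/orP; [right|left]; apply/eqP; lia.
  have E : j.+1 = (n i).-1 by have := ltn_ord j; lia.
  exists (Some (Tagged (fun i => 'I_(n i).-1) (Ordinal p1))), None.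
  split; first by [].
  have jp : 0 < nat_of_ord j by rewrite lt0n.
  rewrite /= eqxx /=; split; apply/orP; [right|right]; apply/eqP; lia.
pose i0 : 'I_k := Ordinal k0.
have q0 : 0 < (n i0).-1 by have := n3 i0; lia.
have q1 : (n i0).-2 < (n i0).-1 by have := n3 i0; lia.
exists (Some (Tagged (fun i => 'I_(n i).-1) (Ordinal q0))),
       (Some (Tagged (fun i => 'I_(n i).-1) (Ordinal q1))).
split; first by apply/eqP => /(congr1 F) /=; have := n3 i0; lia.
split; first by [].
by rewrite /=; apply/orP; right; apply/eqP; have := n3 i0; lia.
Qed.

Theorem mainTheorem4 (T : finType) (e : rel T) (k : nat) (n : 'I_k -> nat) :
  0 < k ->
  (forall i, 3 <= n i) ->
  (exists phi : T -> opuc_vertex n,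
      bijective phi /\ forall x y, e x y = @opuc_adj k n (phi x) (phi y)) ->
  is_strength e (#|T| + 2).
Proof.
move=> k0 n3 [phi [bphi hadj]].
pose m := #|{: {i : 'I_k & 'I_(n i).-1}}|.
have cardT : #|T| = m.+1 by rewrite (bij_eq_card bphi) card_option.
case: (bphi) => psi c1 c2.
have lower : forall f, is_numbering f -> #|T| + 2 <= str_f e f.
  move=> f [inj [rng surj]].
  have [x0 fx0] := surj #|T| (ltac:(rewrite cardT; lia)).
  have [u1 [u2 [neq [a1 a2]]]] := neighbors k0 n3 (phi x0).
  have e1 : e x0 (psi u1) by rewrite hadj c2.
  have e2 : e x0 (psi u2) by rewrite hadj c2.
  have ne : f (psi u1) <> f (psi u2).
    move=> /inj /(congr1 phi); rewrite !c2 => E; by rewrite E eqxx in neq.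
  have := str_ge f e1; have := str_ge f e2.
  have := rng (psi u1); have := rng (psi u2); lia.
pose lab (v : opuc_vertex n) := if v is Some a then (g m (pos a)).+1 else 1.
have labinj : injective lab.
  case=> [a|] [b|] //= .
  - by move=> [] /g_inj H; congr Some; apply: pos_inj; apply: H; apply: pos_lt.
  - move=> E; have := g_rng (pos_lt a); rewrite -/m; lia.
  - move=> E; have := g_rng (pos_lt b); rewrite -/m; lia.
have labrng : forall v, 1 <= lab v <= #|T|.
  case=> [a|] /=; rewrite cardT //.
  have := g_rng (pos_lt a); rewrite -/m; lia.
have numf : is_numbering (lab \o phi).
  have inj : injective (lab \o phi) by apply: inj_comp => //; exact: bij_inj.
  split=> //; split=> [x|]; first exact: labrng.
  by apply: surj_of_inj => // x; exact: labrng.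
split=> //.
exists (lab \o phi); split=> //.
apply/eqP; rewrite eqn_leq lower // andbT.
apply/bigmax_leqP => u _; apply/bigmax_leqP => v; rewrite hadj /=.
rewrite cardT.
case: (phi u) => [[i j]|]; case: (phi v) => [[i' j']|] //=.
- move=> /andP [/eqP Hi H]; subst i'.
  case/orP: H => /eqP H.
  + have Hl := pos_lt (Tagged (fun i => 'I_(n i).-1) j').
    move: Hl; rewrite /pos /= -?H ?addnS -/m => Hl.
    have := g_sum Hl; rewrite /pos /= -?H ?addnS; lia.
  + have Hl := pos_lt (Tagged (fun i => 'I_(n i).-1) j).
    move: Hl; rewrite /pos /= -?H ?addnS -/m => Hl.
    have := g_sum Hl; rewrite /pos /= -?H ?addnS; lia.
- move=> _; have := g_rng (pos_lt (Tagged (fun i => 'I_(n i).-1) j)); rewrite /pos /= -/m; lia.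
- move=> _; have := g_rng (pos_lt (Tagged (fun i => 'I_(n i).-1) j')); rewrite /pos /= -/m; lia.
Qed.
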